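(* Let $\alpha\ge0$ and $\epsilon\ge0$, and let $P=\{p_0,p_1,\dots,p_k\}\subset\mathbb R^n$ satisfy $\|p_i-p_j\|\le\epsilon\alpha$ for all $i,j$. Then $$\mathrm{CH}\Big(\bigcup_{0\le i\le k}B(p_i;\alpha)\Big)\subseteq\bigcup_{0\le i\le k}B\Big(p_i;\alpha\sqrt{1+\tfrac{\epsilon^2}{2}}\Big).$$
   Context: $B(p;r)$ denotes the open Euclidean ball of radius $r$ centered at $p$; $\mathrm{CH}$ denotes convex hull. *)

(* Defs.v *)
From mathcomp Require Import all_boot all_order all_algebra.
From mathcomp Require Import reals.
Set Implicit Arguments. Unset Strict Implicit. Unset Printing Implicit Defensive.
Import Order.TTheory GRing.Theory Num.Theory.
Local Open Scope ring_scope.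

Definition enorm (R : realType) (n : nat) (v : 'rV[R]_n) : R :=
  Num.sqrt (\sum_(i < n) v ord0 i ^+ 2).

Definition oball (R : realType) (n : nat) (p : 'rV[R]_n) (r : R) : 'rV[R]_n -> Prop :=
  fun x => enorm (x - p) < r.

Definition convex_set (R : realType) (n : nat) (C : 'rV[R]_n -> Prop) : Prop :=
  forall x y (t : R), C x -> C y -> 0 <= t -> t <= 1 -> C (t *: x + (1 - t) *: y).

Definition conv_hull (R : realType) (n : nat) (S : 'rV[R]_n -> Prop) : 'rV[R]_n -> Prop :=
  fun x => forall C, convex_set C -> (forall y, S y -> C y) -> C x.

(* Main.v *)
Require Import Defs.
From mathcomp Require Import all_boot all_order all_algebra.
From mathcomp Require Import reals.
From mathcomp Require Import ring lra.
Import Order.TTheory GRing.Theory Num.Theory.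
Local Open Scope ring_scope.

Section Aux.
Context {R : realType}.

Definition sq {n : nat} (v : 'rV[R]_n) : R := \sum_(j < n) v ord0 j ^+ 2.

Lemma sq_ge0 {n} (v : 'rV[R]_n) : 0 <= sq v.
Proof. by apply: sumr_ge0 => j _; rewrite sqr_ge0. Qed.

Lemma sum3 (I : finType) (c1 c2 c3 : R) (F G H : I -> R) :
  \sum_i (c1 * F i + c2 * G i + c3 * H i) =
  c1 * \sum_i F i + c2 * \sum_i G i + c3 * \sum_i H i.
Proof. by rewrite !big_split /= -!mulr_sumr. Qed.

Lemma scal_id {m : nat} (l : 'I_m -> R) (a x : 'I_m -> R) (y : R) :
  \sum_i l i = 1 ->
  2 * \sum_i l i * (y - a i) ^+ 2 =
  2 * (y - \sum_i l i * a i) ^+ 2 +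
  \sum_i \sum_k l i * l k * (a i - a k) ^+ 2.
Proof.
move=> l1.
have E1 : \sum_i l i * (y - a i) ^+ 2 = y ^+ 2 * (\sum_i l i) + (-2 * y) * (\sum_j l j * a j) + 1 * (\sum_j l j * a j ^+ 2).
  transitivity (\sum_i (y ^+ 2 * l i + (-2 * y) * (l i * a i) + 1 * (l i * a i ^+ 2))).
    by apply: eq_bigr => i _; ring.
  by rewrite sum3.
have E2 : forall i, \sum_k l i * l k * (a i - a k) ^+ 2 =
   (l i * a i ^+ 2) * (\sum_k l k) + (-2 * (l i * a i)) * (\sum_j l j * a j) + l i * (\sum_j l j * a j ^+ 2).
  move=> i.
  transitivity (\sum_k ((l i * a i ^+ 2) * l k + (-2 * (l i * a i)) * (l k * a k) + l i * (l k * a k ^+ 2))).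
    by apply: eq_bigr => k _; ring.
  by rewrite sum3.
rewrite (eq_bigr _ (fun i _ => E2 i)).
have E3 : \sum_i ((l i * a i ^+ 2) * (\sum_k l k) + (-2 * (l i * a i)) * (\sum_j l j * a j) + l i * (\sum_j l j * a j ^+ 2))
   = (\sum_k l k) * (\sum_j l j * a j ^+ 2) + (-2 * (\sum_j l j * a j)) * (\sum_j l j * a j) + (\sum_j l j * a j ^+ 2) * (\sum_k l k).
  transitivity (\sum_i ((\sum_k l k) * (l i * a i ^+ 2) + (-2 * (\sum_j l j * a j)) * (l i * a i) + (\sum_j l j * a j ^+ 2) * l i)).
    by apply: eq_bigr => i _; ring.
  by rewrite sum3.
rewrite E3 E1 l1; ring.
Qed.

Lemma vec_id {n m : nat} (l : 'I_m -> R) (p : 'I_m -> 'rV[R]_n) (x : 'rV[R]_n) :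
  \sum_i l i = 1 ->
  2 * \sum_i l i * sq (x - p i) =
  2 * sq (x - \sum_i l i *: p i) +
  \sum_i \sum_k l i * l k * sq (p i - p k).
Proof.
move=> l1; rewrite /sq.
have -> : 2 * \sum_i l i * \sum_(j < n) (x - p i) ord0 j ^+ 2 =
   \sum_(j < n) (2 * \sum_i l i * (x ord0 j - p i ord0 j) ^+ 2).
  rewrite -mulr_sumr; congr (_ * _).
  rewrite [RHS]exchange_big /=; apply: eq_bigr => i _; rewrite mulr_sumr.
  by apply: eq_bigr => j _; rewrite !mxE.
have -> : \sum_i \sum_k l i * l k * \sum_(j < n) (p i - p k) ord0 j ^+ 2 =
   \sum_(j < n) \sum_i \sum_k l i * l k * (p i ord0 j - p k ord0 j) ^+ 2.
  rewrite [RHS]exchange_big /=; apply: eq_bigr => i _.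
  rewrite [RHS]exchange_big /=; apply: eq_bigr => k _.
  by rewrite mulr_sumr; apply: eq_bigr => j _; rewrite !mxE.
rewrite mulr_sumr -big_split /=; apply: eq_bigr => j _.
rewrite (scal_id l (fun i => p i ord0 j) (fun i => 0) (x ord0 j) l1).
by rewrite !mxE summxE; congr (2 * (_ - _) ^+ 2 + _); apply: eq_bigr => i _; rewrite mxE.
Qed.

Lemma sq_convex {n} (a b : 'rV[R]_n) (t : R) : 0 <= t -> t <= 1 ->
  sq (t *: a + (1 - t) *: b) <= t * sq a + (1 - t) * sq b.
Proof.
move=> t0 t1; rewrite /sq !mulr_sumr -big_split /=; apply: ler_sum => j _.
rewrite !mxE.
have h : 0 <= t * (1 - t) * (a ord0 j - b ord0 j) ^+ 2.
  by apply: mulr_ge0; [apply: mulr_ge0 => //; rewrite subr_ge0 | apply: sqr_ge0].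
nra.
Qed.

End Aux.

Theorem proposition25 (R : realType) (n k : nat) (alpha eps : R)
    (p : 'I_k.+1 -> 'rV[R]_n) :
  0 <= alpha -> 0 <= eps ->
  (forall i j, enorm (p i - p j) <= eps * alpha) ->
  forall x, conv_hull (fun y => exists i, oball (p i) alpha y) x ->
  exists i, oball (p i) (alpha * Num.sqrt (1 + eps ^+ 2 / 2)) x.
Proof.
move=> ha he hd x hx.
pose C := fun y : 'rV[R]_n => exists l : 'I_k.+1 -> R, (forall i, 0 <= l i) /\ \sum_i l i = 1 /\
   sq (y - \sum_i l i *: p i) < alpha ^+ 2.
have convC : convex_set C.
  move=> y z t [ly [ly0 [ly1 lyd]]] [lz [lz0 [lz1 lzd]]] t0 t1.
  exists (fun i => t * ly i + (1 - t) * lz i); split; [|split].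
  - move=> i; apply: addr_ge0; apply: mulr_ge0 => //; by rewrite subr_ge0.
  - by rewrite big_split /= -!mulr_sumr ly1 lz1 !mulr1 addrC subrK.
  - have -> : t *: y + (1 - t) *: z - \sum_i (t * ly i + (1 - t) * lz i) *: p i =
        t *: (y - \sum_i ly i *: p i) + (1 - t) *: (z - \sum_i lz i *: p i).
      rewrite (eq_bigr (fun i => t *: (ly i *: p i) + (1 - t) *: (lz i *: p i))); last first.
        by move=> i _; rewrite scalerDl !scalerA.
      by rewrite big_split /= -!scaler_sumr !scalerBr opprD addrACA.
    apply: le_lt_trans (sq_convex _ _ _ t0 t1) _.
    have t1' : 0 <= 1 - t by rewrite subr_ge0.
    case: (eqVneq t 0) => [-> | tn0]; first by rewrite mul0r add0r subr0 mul1r.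
    have tp : 0 < t by rewrite lt_def tn0 t0.
    have h1 : 0 < t * (alpha ^+ 2 - sq (y - \sum_i ly i *: p i)) by rewrite mulr_gt0 // subr_gt0.
    have h2 : 0 <= (1 - t) * (alpha ^+ 2 - sq (z - \sum_i lz i *: p i)).
      by rewrite mulr_ge0 // subr_ge0 ltW.
    nra.
have subC : forall y, (exists i, oball (p i) alpha y) -> C y.
  move=> y [i hi]; exists (fun j => (j == i)%:R); split; [by move=> j; rewrite ler0n | split].
  - by rewrite (bigD1 i) //= eqxx big1 ?addr0 // => j /negbTE ->.
  - rewrite (bigD1 i) //= eqxx scale1r big1 ?addr0; last by move=> j /negbTE ->; rewrite scale0r.
    change (is_true (Num.sqrt (sq (y - p i)) < alpha)) in hi.
    have := sqr_sqrtr (sq_ge0 (y - p i)). have := sqrtr_ge0 (sq (y - p i)).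
    nra.
have [l [l0 [l1 lx]]] := hx C convC subC.
have key := vec_id l p x l1.
have bound : \sum_i \sum_j l i * l j * sq (p i - p j) <= (eps * alpha) ^+ 2.
  apply: le_trans (_ : \sum_i \sum_j l i * l j * (eps * alpha) ^+ 2 <= _).
    apply: ler_sum => i _; apply: ler_sum => j _; apply: ler_wpM2l.
      by apply: mulr_ge0.
    have := hd i j; change (is_true (Num.sqrt (sq (p i - p j)) <= eps * alpha) -> is_true (sq (p i - p j) <= (eps * alpha) ^+ 2)).
    have := sqr_sqrtr (sq_ge0 (p i - p j)). have := sqrtr_ge0 (sq (p i - p j)).
    have : 0 <= eps * alpha by apply: mulr_ge0.
    nra.
  rewrite (eq_bigr (fun i => l i * (eps * alpha) ^+ 2)); last first.
    move=> i _; transitivity (\sum_j (l i * (eps * alpha) ^+ 2) * l j).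
      by apply: eq_bigr => j _; ring.
    by rewrite -mulr_sumr l1 mulr1.
  by rewrite -mulr_suml l1 mul1r.
have c0 : 0 <= 1 + eps ^+ 2 / 2.
  by apply: addr_ge0 => //; apply: divr_ge0 => //; apply: sqr_ge0.
case: (pickP (fun i => sq (x - p i) < alpha ^+ 2 * (1 + eps ^+ 2 / 2))) => [i Hi | H].
  exists i; rewrite /oball.
  change (is_true (Num.sqrt (sq (x - p i)) < alpha * Num.sqrt (1 + eps ^+ 2 / 2))).
  have e1 := sqr_sqrtr (sq_ge0 (x - p i)). have e2 := sqrtr_ge0 (sq (x - p i)).
  have e3 := sqr_sqrtr c0. have e4 := sqrtr_ge0 (1 + eps ^+ 2 / 2).
  move: Hi => /= Hi.
  move: e1 e2 e3 e4 Hi.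
  set s := Num.sqrt _. set r := Num.sqrt _. set q := sq _.
  move=> e1 e2 e3 e4 Hi.
  have ar : 0 <= alpha * r by apply: mulr_ge0.
  rewrite ltNge; apply/negP => h.
  have : (s - alpha * r) * (s + alpha * r) >= 0.
    by apply: mulr_ge0; [rewrite subr_ge0 | apply: addr_ge0].
  have : q = s ^+ 2 by [].
  have : (alpha * r) ^+ 2 = alpha ^+ 2 * (1 + eps ^+ 2 / 2) by rewrite exprMn e3.
  nra.
exfalso.
have H' : forall i, alpha ^+ 2 * (1 + eps ^+ 2 / 2) <= sq (x - p i).
  by move=> i; rewrite leNgt H.
have low : alpha ^+ 2 * (1 + eps ^+ 2 / 2) <= \sum_i l i * sq (x - p i).
  apply: le_trans (_ : \sum_i l i * (alpha ^+ 2 * (1 + eps ^+ 2 / 2)) <= _).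
    by rewrite -mulr_suml l1 mul1r.
  by apply: ler_sum => i _; apply: ler_wpM2l.
nra.
Qed.
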